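(* Let $G$ be a finite affine primitive permutation group with point stabilizer $H$ and minimal normal subgroup $V\cong C_p^n$, written additively as an $\mathbb F_p$-vector space. Let $h\in H$ and $v\in V$, set $w:=v^{h^{-1}}-v$ and $k:=\lceil\log_2 p\rceil$. Then the cyclic subgroup $\langle w\rangle$ is contained in a setwise product of $k+1$ conjugates of $H$.
   Context: A finite primitive permutation group $G$ is affine if it has an abelian minimal normal subgroup; this is then the unique minimal normal subgroup $V\cong C_p^n$ ($p$ prime), $G=VH$ where $H$ is a point stabilizer, and $H$ acts on $V$ by conjugation $v^{h}=h^{-1}vh$, irreducibly, as a group of linear transformations. *)

(* Defs.v *)
From mathcomp Require Import all_boot all_order all_fingroup all_solvable.
Set Implicit Arguments.
Unset Strict Implicit.
Unset Printing Implicit Defensive.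

(* Main.v *)
Require Import Defs.
From mathcomp Require Import all_boot all_order all_fingroup all_solvable.
Set Warnings "-notation-overridden".
From mathcomp Require Import zify.
Set Implicit Arguments. Unset Strict Implicit. Unset Printing Implicit Defensive.
Local Open Scope group_scope.

Lemma aux (gT : finGroupType) (s B B' : gT) : commute s (B * s * B^-1) -> commute B' B^-1 ->
 (B ^ s^-1) * ((B' * B^-1) ^ (s * s)^-1) = (s ^ B^-1 * s^-1) * (B' ^ (s*s)^-1).
Proof.
move=> c1 c2; rewrite !conjgE !invgK c2 !mulgA !mulgVK.
move: c1; rewrite /commute !mulgA => c1.
by rewrite c1.
Qed.

Section Key.
Variables (gT : finGroupType) (G V H : {group gT}) (h u : gT).
Hypotheses (nVG : G \subset 'N(V)) (abV : abelian V) (Hh : h \in H)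
  (sHG : H \subset G) (Vu : u \in V).

Definition Fh x := x ^ h^-1 * x^-1.

Let Gh : h \in G. Proof. exact: subsetP sHG h Hh. Qed.
Let Nh : h^-1 \in 'N(V). Proof. by apply: (subsetP nVG); rewrite groupV. Qed.
Let comV x y : x \in V -> y \in V -> commute x y.
Proof. by move=> xV yV; apply: (centsP abV). Qed.
Let FV x : x \in V -> Fh x \in V.
Proof. by move=> xV; rewrite /Fh groupM ?groupV // memJ_norm. Qed.

Lemma FhM x y : x \in V -> y \in V -> Fh (x * y) = Fh x * Fh y.
Proof.
move=> xV yV; rewrite /Fh conjMg invMg.
have x'V : x ^ h^-1 \in V by rewrite memJ_norm.
have y'V : y ^ h^-1 \in V by rewrite memJ_norm.
move: (x ^ h^-1) (y ^ h^-1) x'V y'V => x' y' x'V y'V.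
have c := comV (groupM y'V (groupVr yV)) (groupVr xV).
by rewrite -!mulgA (mulgA y') c.
Qed.

Lemma Fh_step (b : bool) s : s \in V -> s ^ (h ^+ b)^-1 * s^-1 = Fh (s ^+ b).
Proof.
by case: b => /= ; rewrite /Fh ?expg1 ?expg0 ?invg1 ?conjg1 ?conj1g ?mulgV ?mulg1.
Qed.

Variable m : nat.
Definition B i := h ^+ odd (m %/ 2 ^ i).
Definition y i := (u ^+ (2 ^ i))^-1.
Definition g i := (B i * (if i is j.+1 then B j else 1)^-1) ^ y i.

Lemma mod_step k : m %% 2 ^ k.+1 = m %% 2 ^ k + odd (m %/ 2 ^ k) * 2 ^ k.
Proof.
have d0 : 0 < 2 ^ k by rewrite expn_gt0.
have Em := divn_eq m (2 ^ k).
have Eq := divn_eq (m %/ 2 ^ k) 2.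
rewrite modn2 in Eq.
have lt := ltn_pmod m d0.
rewrite {1}Em {1}Eq expnS.
have -> : ((m %/ 2 ^ k) %/ 2 * 2 + odd (m %/ 2 ^ k)) * 2 ^ k + m %% 2 ^ k
   = (m %/ 2 ^ k) %/ 2 * (2 * 2 ^ k) + (m %% 2 ^ k + odd (m %/ 2 ^ k) * 2 ^ k).
  by rewrite mulnDl -mulnA (mulnC 2) addnA addnAC.
rewrite modnMDl modn_small //.
by case: (odd _); rewrite ?mul1n ?mul0n ?addn0; lia.
Qed.

Lemma partial k : \prod_(i < k.+1) g i = Fh (u ^+ (m %% 2 ^ k)) * B k ^ y k.
Proof.
elim: k => [|k IH].
  rewrite big_ord1 /g /Fh expn0 modn1 expg0 invg1 conj1g mulg1 mul1g.
  by rewrite mul1g.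
rewrite big_ord_recr /= IH /g.
set s := u ^+ (2 ^ k).
have sV : s \in V by rewrite groupX.
have ykE : y k = s^-1 by [].
have yk1E : y k.+1 = (s * s)^-1 by rewrite /y expnS mulnC expgM expgS expg1.
rewrite ykE yk1E mod_step expgD mulnC expgM -/s FhM ?groupX //.
rewrite -Fh_step //.
set X := Fh _.
rewrite -(mulgA X) -(mulgA X) aux //.
  apply: comV => //.
  have -> : B k * s * (B k)^-1 = s ^ (B k)^-1 by rewrite conjgE invgK mulgA.
  rewrite memJ_norm //.
  by rewrite /B groupV groupX // (subsetP nVG) // groupX.
by apply: commuteV; apply: commuteX2.
Qed.
Lemma key n : m < 2 ^ n -> Fh (u ^+ m) \in \prod_(i < n.+1) H :^ y i.
Proof.
move=> lt; have := partial n.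
rewrite modn_small // /B divn_small // expg0 conj1g mulg1 => <-.
apply: mem_prodg => i _; rewrite /g memJ_conjg.
have HB j : h ^+ odd (m %/ 2 ^ j) \in H by rewrite groupX.
case: i => [[|j] ?] /=; by rewrite groupM ?groupV ?group1 ?HB.
Qed.

Lemma FhX x i : x \in V -> Fh x ^+ i = Fh (x ^+ i).
Proof.
move=> xV; rewrite /Fh expgMn ?conjXg ?expgVn //.
by apply: comV; rewrite ?groupV ?memJ_norm.
Qed.
End Key.

Theorem lemma17 (T : finType) (G V : {group {perm T}}) (a : T) (p : nat)
  (h v : {perm T}) :
  [primitive G, on [set: T] | 'P] ->
  V <| G -> minnormal V G -> abelian V ->
  prime p -> p.-group V ->
  h \in 'C_G[a | 'P] -> v \in V ->
  exists x : 'I_(up_log 2 p).+1 -> {perm T},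
    (forall i, x i \in G) /\
    <[(v ^ h^-1) * v^-1]> \subset \prod_(i < (up_log 2 p).+1) ('C_G[a | 'P] :^ x i).
Proof.
move=> _ /andP[sVG nVG] minV abV pr_p pV Hh vV.
have vp : v ^+ p = 1.
  have [_ _ /is_abelemP[q pr_q abq]] := minnormal_solvable minV (subxx V) (abelian_sol abV).
  have [->|nv1] := eqVneq v 1; first by rewrite expg1n.
  have oq := abelem_order_p abq vV nv1.
  have : p.-nat #[v] := pnat_dvd (order_dvdG vV) pV.
  rewrite oq pnatE // inE => /eqP qp.
  by rewrite -qp -oq expg_order.
exists (fun i => y v (nat_of_ord i)); split.
  by move=> i; rewrite /y groupV groupX // (subsetP sVG).
apply/subsetP => z /cycleP[i ->].
have sHG : 'C_G[a | 'P] \subset G := subsetIl _ _.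
rewrite -/(Fh h v) (FhX nVG abV Hh sHG _ vV) -(expg_mod _ vp).
apply: (key nVG abV Hh sHG vV).
apply: (leq_trans (ltn_pmod _ (prime_gt0 pr_p))).
exact: up_logP.
Qed.
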